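(* Let $S$ be a sticky tree with $n$ edges ($n\ge 1$). If the Tamari interval $[\mathrm{D}(S),\mathrm{E}(S)]$ is synchronized, then every non-root node of $S$ that is not a leaf is primary.
   Context: Sticky trees: a plane tree is a rooted tree in which the children of every node are linearly ordered (left to right). The root has depth $0$, a child of a node of depth $d$ has depth $d+1$; a leaf is a node without children. The prefix order is: the root, followed by the prefix order of the subtree of its leftmost child, then of its second child, and so on. $S_u$ denotes the subtree rooted at $u$. A sticky tree is a plane tree $S$ with node set $V$ and a labeling $\ell:V\to\mathbb{N}$ such that: (1) every node $u$ of depth $d$ has $0\le\ell(u)\le d$; (2) every node $u$ of depth $d>0$ has some $v\in S_u$ (possibly $v=u$) with $\ell(v)<d$; (3) for every node $u$ of depth $d$, if some $v\in S_u$ has $\ell(v)=d$, then every node of $S_u$ (including $u$) preceding $v$ in prefix order has label at least $d$. A non-root node is primary if its label equals its depth. The certificate of a non-root node $u$ of depth $d$ is the first node, in prefix order, of $S_u$ whose label is $<d$. The certificate-counting function $c:V\to\mathbb{N}$ assigns to each node $w$ the number of non-root nodes whose certificate is $w$. The words: $\mathrm{E}(S)$ is the word in $\{u,d\}$ obtained by the depth-first traversal of $S$ from the root visiting children left to right, writing $u$ for each move from a node to a child and $d$ for each move back to the parent. If $v_1,\dots,v_n$ are the non-root nodes of $S$ in prefix order, $\mathrm{D}(S)=u\,d^{c(v_1)}\,u\,d^{c(v_2)}\cdots u\,d^{c(v_n)}$. These are Dyck paths of length $2n$ (words with $n$ letters $u$ and $n$ letters $d$, every prefix having at least as many $u$'s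 as $d$'s), and $[\mathrm{D}(S),\mathrm{E}(S)]$ is a Tamari interval. Synchronized intervals: the type of a Dyck path $D$ of length $2n$ is the word $w_1\cdots w_{n-1}$ over $\{N,E\}$ with $w_i=N$ if the $i$-th letter $u$ of $D$ is immediately followed by a letter $d$, and $w_i=E$ otherwise. A Tamari interval $[D_1,D_2]$ is synchronized if $D_1$ and $D_2$ have the same type. *)

(* Defs.v *)
From mathcomp Require Import all_boot.
Set Implicit Arguments. Unset Strict Implicit. Unset Printing Implicit Defensive.

(* A labeled plane tree: a node carries a label (the labeling l) and the
   ordered (left-to-right) list of its children. *)
Inductive ltree := LNode of nat & seq ltree.

Fixpoint tsize (t : ltree) : nat :=
  let: LNode _ ts := t in (sumn (map tsize ts)).+1.

(* Nodes listed in prefix order; each node is recorded as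
   (depth, label, number of nodes of its subtree). The root of the whole tree
   has depth 0 (argument d is the depth of the current subtree's root). *)
Fixpoint pre (d : nat) (t : ltree) : seq (nat * nat * nat) :=
  let: LNode l ts := t in (d, l, tsize t) :: flatten (map (pre d.+1) ts).

(* Nodes of S are identified with their index in prefix order:
   0 is the root, 1..(nnodes S - 1) are the non-root nodes.
   The subtree S_u of the node of index i occupies exactly the indices
   i, i+1, ..., i + ssize S i - 1, in prefix order. *)
Definition nnodes (S : ltree) : nat := size (pre 0 S).
Definition info (S : ltree) (i : nat) : nat * nat * nat := nth (0, 0, 0) (pre 0 S) i.
Definition depth (S : ltree) (i : nat) : nat := (info S i).1.1.
Definition label (S : ltree) (i : nat) : nat := (info S i).1.2.
Definition ssize (S : ltree) (i : nat) : nat := (info S i).2.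
Definition in_sub (S : ltree) (i j : nat) : bool := (i <= j) && (j < i + ssize S i).

Definition is_leaf (S : ltree) (i : nat) : bool := ssize S i == 1.
Definition is_root (S : ltree) (i : nat) : bool := i == 0.

Definition sticky (S : ltree) : Prop :=
  (forall i, i < nnodes S -> label S i <= depth S i) /\
  (forall i, i < nnodes S -> 0 < depth S i ->
     exists j, in_sub S i j /\ label S j < depth S i) /\
  (forall i j, i < nnodes S -> in_sub S i j -> label S j = depth S i ->
     forall k, i <= k < j -> depth S i <= label S k).

Definition primary (S : ltree) (i : nat) : Prop :=
  ~~ is_root S i /\ label S i = depth S i.

Definition cert (S : ltree) (i : nat) : nat :=
  head 0 [seq j <- iota i (ssize S i) | label S j < depth S i].

Definition ccount (S : ltree) (w : nat) : nat :=
  count (fun i => cert S i == w) (iota 1 (nnodes S).-1).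

(* Words over {u,d}: u = true, d = false. *)
Definition Dword (S : ltree) : seq bool :=
  flatten [seq true :: nseq (ccount S i) false | i <- iota 1 (nnodes S).-1].

Fixpoint Eword (t : ltree) : seq bool :=
  let: LNode _ ts := t in
  flatten (map (fun s => true :: rcons (Eword s) false) ts).

(* type of a Dyck path of length 2n: word w_1..w_{n-1} over {N,E},
   encoded N = true, E = false; w_i = N iff the i-th u is immediately
   followed by d. *)
Definition dyck_type (w : seq bool) : seq bool :=
  take (count id w).-1
    [seq ~~ nth true w p.+1 | p <- iota 0 (size w) & nth false w p].

Definition synchronized (D1 D2 : seq bool) : Prop := dyck_type D1 = dyck_type D2.

(* Main.v *)
Require Import Defs.
From mathcomp Require Import all_boot.
From Stdlib Require List.

Definition ufol (w : seq bool) : seq bool :=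
  [seq ~~ nth true w p.+1 | p <- iota 0 (size w) & nth false w p].

Lemma dyck_typeE w : dyck_type w = take (count id w).-1 (ufol w).
Proof. by []. Qed.

Lemma ufol_cons a w :
  ufol (a :: w) = if a then (~~ nth true w 0) :: ufol w else ufol w.
Proof.
rewrite /ufol /=.
have -> : iota 1 (size w) = map succn (iota 0 (size w)).
  by rewrite -[1]addn0 iotaDl.
rewrite filter_map.
by case: a => /=; rewrite -map_comp.
Qed.

Lemma ufol_nseq c w : ufol (nseq c false ++ w) = ufol w.
Proof. by elim: c => //= c IH; rewrite ufol_cons. Qed.

Lemma size_ufol w : size (ufol w) = count id w.
Proof. by elim: w => // a w IH; rewrite ufol_cons; case: a => /=; rewrite IH. Qed.

Definition ltree_ind2 (P : ltree -> Prop)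
  (H : forall l ts, (forall s, Stdlib.Lists.List.In s ts -> P s) -> P (LNode l ts)) : forall t, P t :=
  fix IH t := match t with LNode l ts => H l ts
   ((fix g (ts : seq ltree) : forall s, Stdlib.Lists.List.In s ts -> P s :=
      match ts return forall s, Stdlib.Lists.List.In s ts -> P s with
      | nil => fun s F => False_ind _ F
      | cons x xs => fun s Hin => match Hin with
          | or_introl e => eq_ind x P (IH x) s e
          | or_intror h => g xs s h end end) ts) end.

Lemma tsize_gt0 t : 0 < Defs.tsize t.
Proof. by case: t. Qed.

Definition gl (x : nat * nat * nat) := x.2 == 1.

Lemma ufol_E t : forall d rest,
  ufol (Eword t ++ rest) = map gl (behead (pre d t)) ++ ufol rest.
Proof.
elim/ltree_ind2: t => l ts IH d rest /=.
elim: ts IH rest => // s ss IHs IH rest /=.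
have Hs := IH s (or_introl erefl).
have Hss : forall s, Stdlib.Lists.List.In s ss -> _ := fun s h => IH s (or_intror h).
rewrite -catA /= ufol_cons cat_rcons (Hs d.+1) ufol_cons /= IHs // map_cat.
case: s {Hs IH IHs Hss} => l' ts' /=; congr (_ :: _).
case: ts' => [|x xs] /=.
  by [].
  by rewrite /gl eqSS addn_eq0 eqn0Ngt tsize_gt0.
by rewrite catA.
Qed.

Lemma pre_pos t : forall d, all (fun x => 0 < x.2) (pre d t).
Proof.
elim/ltree_ind2: t => l ts IH d /=.

elim: ts IH => //= s ss IHs IH.
rewrite all_cat (IH s (or_introl erefl)) /=.
exact: IHs (fun s' h => IH s' (or_intror h)).
Qed.

Lemma pre_last t : forall d x, (last x (pre d t)).2 = 1.
Proof.
elim/ltree_ind2: t => l ts IH d x /=.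
case: ts IH => [|s ss] IH //=.
set y := (d, l, _); clearbody y.
elim: ss s IH y => [|s' ss IHs] s IH y /=.
  by rewrite cats0; apply: IH; left.
rewrite last_cat.
apply: IHs => s0 [<-|h]; apply: IH; right; [left|right] => //.
Qed.

Lemma ufol_D (c : nat -> nat) xs : forall k, k < size xs -> 0 < c (nth 0 xs k) ->
  nth false (ufol (flatten [seq true :: nseq (c i) false | i <- xs])) k.
Proof.
elim: xs => //= x xs IH [|k] Hk Hc; rewrite ufol_cons ufol_nseq.
  by case: (c x) Hc.
by apply: IH.
Qed.

Lemma count_D (c : nat -> nat) xs :
  count id (flatten [seq true :: nseq (c i) false | i <- xs]) = size xs.
Proof. by elim: xs => //= x xs IH; rewrite count_cat /= count_nseq IH. Qed.

Theorem mainTheorem12 (S : ltree) (n : nat) :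
  sticky S -> nnodes S = n.+1 -> 1 <= n ->
  synchronized (Dword S) (Eword S) ->
  forall i, i < nnodes S -> ~~ is_root S i -> ~~ is_leaf S i -> primary S i.
Proof.
move=> [H1 [H2 H3]] Hn n1 Hsync i Hi Hr Hl.
split => //; apply/eqP; rewrite eqn_leq H1 //=.
rewrite leqNgt; apply/negP => Hlt.
have Hi0 : 0 < i by rewrite lt0n.
have Hpos : 0 < ssize S i.
  by move/all_nthP: (pre_pos S 0); apply; rewrite -/(nnodes S).
have Hcert : cert S i = i.
  by rewrite /cert; case: (ssize S i) Hpos => //= m _; rewrite Hlt.
have Hc : 0 < ccount S i.
  rewrite /ccount -has_count; apply/hasP; exists i; last by rewrite Hcert.
  by rewrite mem_iota Hi0 Hn add1n -Hn.
have Hin : i < n.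
  rewrite ltn_neqAle -ltnS -Hn Hi andbT; apply/negP => /eqP Hie.
  move: Hl; rewrite /is_leaf /ssize /info Hie.
  have -> : n = (size (pre 0 S)).-1 by rewrite -/(nnodes S) Hn.
  by rewrite nth_last pre_last.
have HE : ufol (Eword S) = map gl (behead (pre 0 S)).
  by rewrite -[Eword S]cats0 (ufol_E _ 0) cats0.
move: Hsync; rewrite /synchronized !dyck_typeE -!size_ufol HE size_map size_behead.
rewrite /Dword size_ufol count_D size_iota -/(nnodes S) Hn /=.
move=> /(congr1 (fun s => nth false s i.-1)).
have Hk : i.-1 < n.-1 by rewrite -ltnS -ltnS !prednK // (leq_trans _ Hin).
rewrite !nth_take //.
rewrite (nth_map (0,0,0)); last by rewrite size_behead -/(nnodes S) Hn /= (leq_trans Hk (leq_pred n)).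
rewrite nth_behead prednK // /gl -/(info S i) -/(ssize S i).
move: Hl; rewrite /is_leaf => /negbTE ->.
move/negbT/negP; apply.
apply: ufol_D; first by rewrite size_iota (leq_trans Hk (leq_pred n)).
by rewrite nth_iota ?add1n ?prednK // ltnW.
Qed.
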